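(* Let $\mathcal{A}$ be a fuzzy automaton and $\Phi=(\varphi_n)_{n\in\mathbb{N}}$ the greatest depth-bounded fuzzy simulation between $\mathcal{A}$ and itself. If $\mathcal{L}$ satisfies the join-meet distributivity law, $\otimes$ is continuous and $\mathcal{A}$ is image-finite, then (a) $\bigwedge_n\varphi_n$ is the greatest fuzzy simulation between $\mathcal{A}$ and itself; (b) each $\varphi_n$ is a fuzzy preorder on $A$; (c) $\|\Phi\|_{\mathcal{A},\mathcal{A}}=1$.
   Context: $\mathcal{L}=\langle L,\le,\otimes,\Rightarrow,0,1\rangle$ is a complete residuated lattice: $\langle L,\le,0,1\rangle$ is a complete lattice with least element $0$ and greatest element $1$, $\langle L,\otimes,1\rangle$ is a commutative monoid, and $x\otimes y\le z$ iff $x\le (y\Rightarrow z)$. Join-meet distributivity law: $a\vee\bigwedge B=\bigwedge_{b\in B}(a\vee b)$. $\otimes$ continuous: $x\otimes\bigwedge Y=\bigwedge_{y\in Y}(x\otimes y)$. Fuzzy relations are maps into $L$ ordered pointwise; $\varphi^{-1}(b,a)=\varphi(a,b)$; $(\varphi\circ\psi)(a,c)=\bigvee_b\varphi(a,b)\otimes\psi(b,c)$, $(f\circ\varphi)(b)=\bigvee_a f(a)\otimes\varphi(a,b)$, $(\varphi\circ g)(a)=\bigvee_b\varphi(a,b)\otimes g(b)$; $S(g,f)=\bigwedge_a(g(a)\Rightarrow f(a))$. A fuzzy relation $\varphi$ on $A$ is a fuzzy preorder if $\varphi(a,a)=1$ for all $a$ and $\varphi\circ\varphi\le\varphi$. A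 fuzzy automaton over $\Sigma$ is $\mathcal{A}=\langle A,\delta^{\mathcal{A}},\sigma^{\mathcal{A}},\tau^{\mathcal{A}}\rangle$ with $A$ nonempty, $\delta^{\mathcal{A}}:A\times\Sigma\times A\to L$, $\sigma^{\mathcal{A}},\tau^{\mathcal{A}}:A\to L$; $\delta^{\mathcal{A}}_s(x,y)=\delta^{\mathcal{A}}(x,s,y)$. It is image-finite if each $\{y\mid\delta^{\mathcal{A}}_s(x,y)>0\}$ is finite and $\sigma^{\mathcal{A}}$ has finite support. $\|\varphi\|_{\mathcal{A},\mathcal{A}}=S(\sigma^{\mathcal{A}},\sigma^{\mathcal{A}}\circ\varphi^{-1})$. A fuzzy simulation between $\mathcal{A}$ and $\mathcal{A}'$ is $\varphi$ with $\varphi^{-1}\circ\tau^{\mathcal{A}}\le\tau^{\mathcal{A}'}$ and $\varphi^{-1}\circ\delta^{\mathcal{A}}_s\le\delta^{\mathcal{A}'}_s\circ\varphi^{-1}$ for all $s$. A depth-bounded fuzzy simulation between $\mathcal{A}$ and $\mathcal{A}'$ is a sequence $(\varphi_n)_{n\in\mathbb{N}}$ with $\varphi_n\le\varphi_{n-1}$ ($n\ge1$), $\varphi_0^{-1}\circ\tau^{\mathcal{A}}\le\tau^{\mathcal{A}'}$, $\varphi_n^{-1}\circ\delta^{\mathcal{A}}_s\le\delta^{\mathcal{A}'}_s\circ\varphi_{n-1}^{-1}$ ($s\in\Sigma,n\ge1$); its norm is $\bigwedge_n\|\varphi_n\|$. Sequences are ordered componentwise. *)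

(* Defs.v *)
From Stdlib Require Import List.

(** Complete residuated lattice  <L, <=, (x), =>, 0, 1>.
    Subsets of L are predicates [L -> Prop]; [sup]/[inf] are arbitrary joins/meets. *)
Record CRL := {
  car :> Type;
  le : car -> car -> Prop;
  le_refl : forall x, le x x;
  le_trans : forall x y z, le x y -> le y z -> le x z;
  le_antisym : forall x y, le x y -> le y x -> x = y;
  sup : (car -> Prop) -> car;
  sup_ub : forall (S : car -> Prop) x, S x -> le x (sup S);
  sup_least : forall (S : car -> Prop) y, (forall x, S x -> le x y) -> le (sup S) y;
  inf : (car -> Prop) -> car;
  inf_lb : forall (S : car -> Prop) x, S x -> le (inf S) x;
  inf_greatest : forall (S : car -> Prop) y, (forall x, S x -> le y x) -> le y (inf S);
  zero : car;
  one : car;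
  zero_least : forall x, le zero x;
  one_greatest : forall x, le x one;
  mul : car -> car -> car;
  mul_assoc : forall x y z, mul x (mul y z) = mul (mul x y) z;
  mul_comm : forall x y, mul x y = mul y x;
  mul_one : forall x, mul x one = x;
  res : car -> car -> car;
  adjunction : forall x y z, le (mul x y) z <-> le x (res y z)
}.

Arguments le {L} : rename.
Arguments sup {L} : rename.
Arguments inf {L} : rename.
Arguments zero {L} : rename.
Arguments one {L} : rename.
Arguments mul {L} : rename.
Arguments res {L} : rename.

Section FuzzyDefs.
Variable L : CRL.

Definition join (a b : L) : L := sup (fun x => x = a \/ x = b).
Definition bigsup {I : Type} (f : I -> L) : L := sup (fun x => exists i, x = f i).
Definition biginf {I : Type} (f : I -> L) : L := inf (fun x => exists i, x = f i).

Definition join_meet_distributive : Prop :=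
  forall (a : L) (B : L -> Prop),
    join a (inf B) = inf (fun x => exists b, B b /\ x = join a b).

Definition mul_continuous : Prop :=
  forall (x : L) (Y : L -> Prop), (exists y, Y y) ->
    mul x (inf Y) = inf (fun z => exists y, Y y /\ z = mul x y).

Definition frel (A B : Type) := A -> B -> L.
Definition fset (A : Type) := A -> L.

Definition rel_le {A B : Type} (phi psi : frel A B) : Prop :=
  forall a b, le (phi a b) (psi a b).
Definition set_le {A : Type} (f g : fset A) : Prop := forall a, le (f a) (g a).

Definition inv {A B : Type} (phi : frel A B) : frel B A := fun b a => phi a b.

Definition rcomp {A B C : Type} (phi : frel A B) (psi : frel B C) : frel A C :=
  fun a c => bigsup (fun b : B => mul (phi a b) (psi b c)).
Definition scomp {A B : Type} (f : fset A) (phi : frel A B) : fset B :=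
  fun b => bigsup (fun a : A => mul (f a) (phi a b)).
Definition compv {A B : Type} (phi : frel A B) (g : fset B) : fset A :=
  fun a => bigsup (fun b : B => mul (phi a b) (g b)).
Definition subsethood {A : Type} (g f : fset A) : L :=
  biginf (fun a : A => res (g a) (f a)).

Definition fuzzy_preorder {A : Type} (phi : frel A A) : Prop :=
  (forall a, phi a a = one) /\ rel_le (rcomp phi phi) phi.

Record fautomaton (Sigma : Type) := {
  st : Type;
  st_nonempty : inhabited st;
  delta : st -> Sigma -> st -> L;
  sigma : fset st;
  tau : fset st
}.

Arguments st {Sigma}.
Arguments delta {Sigma}.
Arguments sigma {Sigma}.
Arguments tau {Sigma}.

Definition deltas {Sigma} (M : fautomaton Sigma) (s : Sigma) : frel (st M) (st M) :=
  fun x y => delta M x s y.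

Definition image_finite {Sigma} (M : fautomaton Sigma) : Prop :=
  (forall (x : st M) (s : Sigma), exists l : list (st M),
      forall y, delta M x s y <> zero -> In y l) /\
  (exists l : list (st M), forall x, sigma M x <> zero -> In x l).

Definition rel_norm {Sigma} (M M' : fautomaton Sigma) (phi : frel (st M) (st M')) : L :=
  subsethood (sigma M) (scomp (sigma M') (inv phi)).

Definition fuzzy_simulation {Sigma} (M M' : fautomaton Sigma)
    (phi : frel (st M) (st M')) : Prop :=
  set_le (compv (inv phi) (tau M)) (tau M') /\
  forall s, rel_le (rcomp (inv phi) (deltas M s)) (rcomp (deltas M' s) (inv phi)).

Definition greatest_fuzzy_simulation {Sigma} (M M' : fautomaton Sigma)
    (phi : frel (st M) (st M')) : Prop :=
  fuzzy_simulation M M' phi /\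
  forall psi, fuzzy_simulation M M' psi -> rel_le psi phi.

Definition db_fuzzy_simulation {Sigma} (M M' : fautomaton Sigma)
    (Phi : nat -> frel (st M) (st M')) : Prop :=
  (forall n, rel_le (Phi (S n)) (Phi n)) /\
  set_le (compv (inv (Phi 0)) (tau M)) (tau M') /\
  (forall s n, rel_le (rcomp (inv (Phi (S n))) (deltas M s))
                      (rcomp (deltas M' s) (inv (Phi n)))).

Definition greatest_db_fuzzy_simulation {Sigma} (M M' : fautomaton Sigma)
    (Phi : nat -> frel (st M) (st M')) : Prop :=
  db_fuzzy_simulation M M' Phi /\
  forall Psi, db_fuzzy_simulation M M' Psi -> forall n, rel_le (Psi n) (Phi n).

Definition db_norm {Sigma} (M M' : fautomaton Sigma)
    (Phi : nat -> frel (st M) (st M')) : L :=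
  biginf (fun n : nat => rel_norm M M' (Phi n)).

Definition rel_biginf {A B : Type} (Phi : nat -> frel A B) : frel A B :=
  fun a b => biginf (fun n : nat => Phi n a b).

End FuzzyDefs.

Arguments st {L Sigma}.
Arguments delta {L Sigma}.
Arguments sigma {L Sigma}.
Arguments tau {L Sigma}.

(* Main.v *)
Require Import Defs.
From Stdlib Require Import List Classical FunctionalExtensionality Arith Lia.

Section Aux.
Variable L : CRL.

Lemma leT (x y z : L) : le x y -> le y z -> le x z.
Proof. apply le_trans. Qed.
Lemma leR (x : L) : le x x.
Proof. apply le_refl. Qed.

Lemma bsup_ub_le {I} (f : I -> L) (x : L) (i : I) : le x (f i) -> le x (bigsup L f).
Proof. intros H. eapply leT; [exact H|]. apply sup_ub. exists i; reflexivity. Qed.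
Lemma bsup_least {I} (f : I -> L) y : (forall i, le (f i) y) -> le (bigsup L f) y.
Proof. intros H. apply sup_least. intros x [i ->]. apply H. Qed.
Lemma binf_lb_le {I} (f : I -> L) (x : L) (i : I) : le (f i) x -> le (biginf L f) x.
Proof. intros H. eapply leT; [|exact H]. apply inf_lb. exists i; reflexivity. Qed.
Lemma binf_glb {I} (f : I -> L) y : (forall i, le y (f i)) -> le y (biginf L f).
Proof. intros H. apply inf_greatest. intros x [i ->]. apply H. Qed.

Lemma bsup_mono {I} (f g : I -> L) : (forall i, le (f i) (g i)) -> le (bigsup L f) (bigsup L g).
Proof. intros H; apply bsup_least; intro i; apply (bsup_ub_le _ _ i); apply H. Qed.
Lemma binf_mono {I} (f g : I -> L) : (forall i, le (f i) (g i)) -> le (biginf L f) (biginf L g).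
Proof. intros H; apply binf_glb; intro i; apply (binf_lb_le _ _ i); apply H. Qed.
Lemma bsup_ext {I} (f g : I -> L) : (forall i, f i = g i) -> bigsup L f = bigsup L g.
Proof. intros H; apply le_antisym; apply bsup_mono; intro i; rewrite H; apply leR. Qed.

Lemma mul_mono_l (a b c : L) : le a b -> le (mul a c) (mul b c).
Proof. intros H. apply adjunction. eapply leT; [exact H|]. apply adjunction. apply leR. Qed.
Lemma mul_mono_r (a b c : L) : le a b -> le (mul c a) (mul c b).
Proof. rewrite !(mul_comm L c). apply mul_mono_l. Qed.
Lemma mul_mono (a a' b b' : L) : le a a' -> le b b' -> le (mul a b) (mul a' b').
Proof. intros H1 H2. eapply leT; [apply mul_mono_l, H1| apply mul_mono_r, H2]. Qed.

Lemma mul_sup_l {I} (f : I -> L) c : le (mul (bigsup L f) c) (bigsup L (fun i => mul (f i) c)).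
Proof. apply adjunction. apply bsup_least. intro i. apply adjunction.
  apply (bsup_ub_le (fun i => mul (f i) c) _ i). apply leR. Qed.
Lemma mul_sup_r {I} (f : I -> L) c : le (mul c (bigsup L f)) (bigsup L (fun i => mul c (f i))).
Proof. rewrite mul_comm. eapply leT; [apply mul_sup_l|]. apply bsup_mono; intro i.
  rewrite mul_comm; apply leR. Qed.
Lemma mul_zero_l (c z : L) : le (mul zero c) z.
Proof. apply adjunction, zero_least. Qed.

Lemma rel_le_trans {A B} (p q r : frel L A B) : rel_le L p q -> rel_le L q r -> rel_le L p r.
Proof. intros H1 H2 a b; eapply leT; [apply H1|apply H2]. Qed.
Lemma rel_le_refl {A B} (p : frel L A B) : rel_le L p p.
Proof. intros a b; apply leR. Qed.
Lemma set_le_trans {A} (p q r : fset L A) : set_le L p q -> set_le L q r -> set_le L p r.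
Proof. intros H1 H2 a; eapply leT; [apply H1|apply H2]. Qed.

Lemma rcomp_mono {A B C} (p p' : frel L A B) (q q' : frel L B C) :
  rel_le L p p' -> rel_le L q q' -> rel_le L (rcomp L p q) (rcomp L p' q').
Proof. intros H1 H2 a c; unfold rcomp; apply bsup_mono; intro b; apply mul_mono; auto. Qed.

Lemma compv_mono {A B} (p p' : frel L A B) (g g' : fset L B) :
  rel_le L p p' -> set_le L g g' -> set_le L (compv L p g) (compv L p' g').
Proof. intros H1 H2 a; unfold compv; apply bsup_mono; intro b; apply mul_mono; auto. Qed.

Lemma rcomp_assoc {A B C D} (p : frel L A B) (q : frel L B C) (r : frel L C D) :
  rcomp L (rcomp L p q) r = rcomp L p (rcomp L q r).
Proof.
  unfold rcomp. extensionality a. extensionality d. apply le_antisym.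
  - apply bsup_least; intro c. eapply leT; [apply mul_sup_l|].
    apply bsup_least; intro b. apply (bsup_ub_le _ _ b). cbv beta.
    rewrite <- mul_assoc. apply mul_mono_r. apply (bsup_ub_le (fun c => mul (q b c) (r c d)) _ c).
    apply leR.
  - apply bsup_least; intro b. eapply leT; [apply mul_sup_r|].
    apply bsup_least; intro c. apply (bsup_ub_le _ _ c). cbv beta.
    rewrite mul_assoc. apply mul_mono_l. apply (bsup_ub_le (fun b => mul (p a b) (q b c)) _ b).
    apply leR.
Qed.

Lemma compv_rcomp {A B C} (p : frel L A B) (q : frel L B C) (g : fset L C) :
  set_le L (compv L (rcomp L p q) g) (compv L p (compv L q g)).
Proof.
  intro a. unfold compv, rcomp.
  apply bsup_least; intro c. eapply leT; [apply mul_sup_l|].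
  apply bsup_least; intro b. apply (bsup_ub_le _ _ b). cbv beta.
  rewrite <- mul_assoc. apply mul_mono_r. apply (bsup_ub_le (fun c => mul (q b c) (g c)) _ c).
  apply leR.
Qed.

Lemma inv_rcomp {A B C} (p : frel L A B) (q : frel L B C) :
  inv L (rcomp L p q) = rcomp L (inv L q) (inv L p).
Proof.
  unfold inv, rcomp. extensionality c. extensionality a. apply bsup_ext; intro b.
  apply mul_comm.
Qed.

Definition Idr {A} : frel L A A := fun a b => sup (fun x : L => x = one /\ a = b).

Lemma Id_diag {A} (a : A) : Idr a a = one.
Proof. apply le_antisym; [apply one_greatest|]. apply sup_ub. split; reflexivity. Qed.

Lemma Id_le {A} (a b : A) (t z : L) : (a = b -> le t z) -> le (mul (Idr a b) t) z.
Proof. intros H. apply adjunction. apply sup_least. intros x [-> e]. apply adjunction.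
  rewrite mul_comm, mul_one. apply H, e. Qed.

Lemma rcomp_Id_l {A B} (p : frel L A B) : rcomp L Idr p = p.
Proof.
  unfold rcomp. extensionality a. extensionality c. apply le_antisym.
  - apply bsup_least; intro b. apply Id_le. intros ->; apply leR.
  - apply (bsup_ub_le _ _ a). cbv beta. rewrite Id_diag, mul_comm, mul_one. apply leR.
Qed.

Lemma rcomp_Id_r {A B} (p : frel L A B) : rcomp L p Idr = p.
Proof.
  unfold rcomp. extensionality a. extensionality c. apply le_antisym.
  - apply bsup_least; intro b. rewrite mul_comm. apply Id_le. intros ->; apply leR.
  - apply (bsup_ub_le _ _ c). cbv beta. rewrite Id_diag, mul_one. apply leR.
Qed.

Lemma compv_Id {A} (g : fset L A) : compv L Idr g = g.
Proof.
  unfold compv. extensionality a. apply le_antisym.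
  - apply bsup_least; intro b. apply Id_le. intros ->; apply leR.
  - apply (bsup_ub_le _ _ a). cbv beta. rewrite Id_diag, mul_comm, mul_one. apply leR.
Qed.

Lemma inv_Id {A} : inv L (@Idr A) = Idr.
Proof.
  unfold inv. extensionality a. extensionality b. apply le_antisym;
  apply sup_least; intros x [-> e]; apply sup_ub; split; auto.
Qed.

Lemma join_ub_l (a b : L) : le a (join L a b).
Proof. apply sup_ub; left; reflexivity. Qed.
Lemma join_ub_r (a b : L) : le b (join L a b).
Proof. apply sup_ub; right; reflexivity. Qed.
Lemma join_least (a b z : L) : le a z -> le b z -> le (join L a b) z.
Proof. intros H1 H2. apply sup_least. intros x [-> | ->]; auto. Qed.
Lemma join_mono (a a' b b' : L) : le a a' -> le b b' -> le (join L a b) (join L a' b').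
Proof. intros H1 H2. apply join_least.
  - eapply leT; [exact H1| apply join_ub_l].
  - eapply leT; [exact H2| apply join_ub_r]. Qed.
Lemma join_comm (a b : L) : join L a b = join L b a.
Proof. apply le_antisym; apply join_least; first [apply join_ub_l | apply join_ub_r]. Qed.

Lemma antitone (a : nat -> L) : (forall n, le (a (S n)) (a n)) ->
  forall n k, n <= k -> le (a k) (a n).
Proof. intros H n k Hk. induction Hk; [apply leR|]. eapply leT; [apply H|exact IHHk]. Qed.

Lemma chain2 (a b : nat -> L) : join_meet_distributive L ->
  (forall n, le (a (S n)) (a n)) -> (forall n, le (b (S n)) (b n)) ->
  le (biginf L (fun n => join L (a n) (b n))) (join L (biginf L a) (biginf L b)).
Proof.
  intros Hd Ha Hb.
  change (biginf L b) with (inf (fun x => exists i, x = b i)).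
  rewrite Hd. apply inf_greatest. intros x [y [[m ->] ->]].
  rewrite join_comm.
  change (biginf L a) with (inf (fun x => exists i, x = a i)).
  rewrite Hd. apply inf_greatest. intros x [y [[n ->] ->]].
  apply (binf_lb_le _ _ (max n m)). cbv beta.
  rewrite join_comm. apply join_mono; apply antitone; auto; lia.
Qed.

Fixpoint J {X} (h : X -> L) (l : list X) : L :=
  match l with nil => zero | x :: l' => join L (h x) (J h l') end.

Lemma J_mono {X} (h h' : X -> L) l : (forall x, le (h x) (h' x)) -> le (J h l) (J h' l).
Proof. intros H. induction l; simpl; [apply leR|]. apply join_mono; auto. Qed.

Lemma J_in {X} (h : X -> L) l x : In x l -> le (h x) (J h l).
Proof. induction l as [|y l IH]; simpl; [tauto|]. intros [-> | Hi].
  - apply join_ub_l.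
  - eapply leT; [apply IH, Hi| apply join_ub_r]. Qed.

Lemma J_le_sup {X} (h : X -> L) l : le (J h l) (bigsup L h).
Proof. induction l as [|y l IH]; simpl; [apply zero_least|].
  apply join_least; auto. apply (bsup_ub_le _ _ y); apply leR. Qed.

Lemma J_chain {X} (f : nat -> X -> L) l : join_meet_distributive L ->
  (forall n x, le (f (S n) x) (f n x)) ->
  le (biginf L (fun n => J (f n) l)) (J (fun x => biginf L (fun n => f n x)) l).
Proof.
  intros Hd Hf. induction l as [|x l IH]; simpl.
  - apply (binf_lb_le _ _ 0). apply leR.
  - eapply leT; [apply (chain2 (fun n => f n x) (fun n => J (f n) l))|]; auto.
    + intro n. apply J_mono; auto.
    + apply join_mono; [apply leR| exact IH].
Qed.

End Aux.

Theorem mainTheorem5 (L : CRL) (Sigma : Type) (M : fautomaton L Sigma)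
    (Phi : nat -> frel L (st M) (st M)) :
  greatest_db_fuzzy_simulation L M M Phi ->
  join_meet_distributive L ->
  mul_continuous L ->
  image_finite L M ->
  greatest_fuzzy_simulation L M M (rel_biginf L Phi) /\
  (forall n, fuzzy_preorder L (Phi n)) /\
  db_norm L M M Phi = one.
Proof.
  intros [[Hdec [Htau Hdel]] Hgr] Hd Hc [Hif _].
  assert (Hconst : forall psi, fuzzy_simulation L M M psi ->
                   db_fuzzy_simulation L M M (fun _ => psi)).
  { intros psi [H1 H2]. split; [intro n; apply rel_le_refl|]. split; auto. }
  assert (HId : forall n, rel_le L (Idr L) (Phi n)).
  { apply Hgr. apply Hconst. split.
    - rewrite inv_Id, compv_Id. intro a; apply leR.
    - intro s. rewrite inv_Id, rcomp_Id_l, rcomp_Id_r. apply rel_le_refl. }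
  assert (Hrefl : forall n a, Phi n a a = one).
  { intros n a. apply le_antisym; [apply one_greatest|].
    rewrite <- (Id_diag L a). apply HId. }
  split; [|split].
  - split.
    + split.
      * eapply set_le_trans; [|exact Htau]. apply compv_mono; [|intro a; apply leR].
        intros a b. unfold inv, rel_biginf. apply (binf_lb_le _ _ _ 0). apply leR.
      * intros s b y.
        eapply leT with (y := biginf L (fun n => rcomp L (deltas L M s) (inv L (Phi n)) b y)).
        { apply binf_glb. intro n. eapply leT; [|apply (Hdel s n)].
          apply rcomp_mono; [|apply rel_le_refl]. intros u v. unfold inv, rel_biginf.
          apply (binf_lb_le _ _ _ (S n)). apply leR. }
        destruct (Hif b s) as [l Hl].
        set (f := fun n x => mul (deltas L M s b x) (Phi n y x)).
        eapply leT with (y := biginf L (fun n => J L (f n) l)).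
        { apply binf_mono. intro n. unfold rcomp. apply bsup_least. intro x.
          unfold inv. destruct (classic (delta M b s x = zero)) as [Hz|Hz].
          - unfold deltas. rewrite Hz. apply mul_zero_l.
          - apply (J_in L (f n) l x). apply Hl, Hz. }
        eapply leT; [apply J_chain; auto|].
        { intros n x. unfold f. apply mul_mono_r. apply Hdec. }
        eapply leT; [|apply J_le_sup]. apply J_mono. intro x. unfold f.
        unfold inv, rel_biginf, biginf at 2. rewrite Hc by (exists (Phi 0 y x); exists 0; reflexivity).
        apply inf_greatest. intros z [v [[n ->] ->]]. apply (binf_lb_le _ _ _ n). apply leR.
    + intros psi Hpsi a b. unfold rel_biginf. apply binf_glb. intro n.
      apply (Hgr _ (Hconst psi Hpsi)).
  - intro n. split; [apply Hrefl|].
    apply (Hgr (fun n => rcomp L (Phi n) (Phi n))).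
    split; [|split].
    + intro k. apply rcomp_mono; apply Hdec.
    + cbv beta. rewrite inv_rcomp. eapply set_le_trans; [apply compv_rcomp|].
      eapply set_le_trans; [|exact Htau]. apply compv_mono; [apply rel_le_refl|exact Htau].
    + intros s k. cbv beta. rewrite !inv_rcomp. rewrite rcomp_assoc.
      eapply rel_le_trans; [apply rcomp_mono; [apply rel_le_refl| apply Hdel]|].
      rewrite <- rcomp_assoc.
      eapply rel_le_trans; [apply rcomp_mono; [apply Hdel| apply rel_le_refl]|].
      rewrite rcomp_assoc. apply rel_le_refl.
  - apply le_antisym; [apply one_greatest|].
    unfold db_norm. apply binf_glb. intro n. unfold rel_norm, subsethood.
    apply binf_glb. intro a. apply adjunction. rewrite mul_comm, mul_one.
    unfold scomp, inv. apply (bsup_ub_le L _ _ a). rewrite Hrefl, mul_one. apply leR.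
Qed.
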